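(* Let $P=\{(x,y)\in\mathbb{R}^{p+q}:Ax+Gy\le b\}$ be a nonempty rational polyhedron, let $c\in\mathbb{Q}^p$, $h\in\mathbb{Q}^q$ be such that $cx+hy$ is bounded above on $P$, and let $\gamma^*\in\mathbb{Q}$ be such that $cx+hy\le\gamma^*$ is valid for $P_I$ but not valid for $P$. With $Q$ and $\{v^r\}_{r\in R}$ as below, define for $r\in R$ $$d^r:=v^r_{1..m}A-v^r_{m+1}c,\qquad \delta^r:=\lceil v^r_{1..m}b-v^r_{m+1}\gamma^*\rceil,$$ for $r$ with $v^r_{m+1}>0$ put $\gamma^r:=\dfrac{\delta^r-v^r_{1..m}b}{-v^r_{m+1}}$, and let $\widehat\gamma:=\max\{\gamma^r:r\in R,\ v^r_{m+1}>0\}$ (this index set is nonempty). Then $cx+hy\le\widehat\gamma$ is a cutting plane for $P$, i.e. it is valid for $P_I$ and not valid for $P$.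
   Context: $A\in\mathbb{Q}^{m\times p}$, $G\in\mathbb{Q}^{m\times q}$, $b\in\mathbb{Q}^m$; $P_I=\mathrm{conv}\{(x,y)\in P:x\in\mathbb{Z}^p\}$. $Q=\{v=(v_{1..m},v_{m+1})\in\mathbb{R}^{m+1}: v_{1..m}G-v_{m+1}h=0,\ v\ge0\}$ (with $v_{1..m}$ a row vector in $\mathbb{R}^m$), and $\{v^r\}_{r\in R}$ ($R$ finite) contains exactly one representative of each extreme ray of $Q$, each scaled so that $v^r_{1..m}A-v^r_{m+1}c\in\mathbb{Z}^p$. *)

(* Defs.v *)
(* The ambient ordered field is an arbitrary archimedean real
   field R (e.g. the reals embed here; rat is an instance); data are rational
   matrices embedded via ratr. *)
From HB Require Import structures.
From mathcomp Require Import all_boot all_order all_algebra.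
Set Implicit Arguments. Unset Strict Implicit. Unset Printing Implicit Defensive.
Import Order.TTheory GRing.Theory Num.Theory.
Local Open Scope ring_scope.

Definition ratmx (R : archiRealFieldType) (m n : nat) (M : 'M[rat]_(m, n)) : 'M[R]_(m, n) :=
  map_mx ratr M.
Arguments ratmx {R m n} M.

Definition inP (R : archiRealFieldType) (m p q : nat)
  (A : 'M[rat]_(m, p)) (G : 'M[rat]_(m, q)) (b : 'cV[rat]_m)
  (z : 'cV[R]_p * 'cV[R]_q) : Prop :=
  forall i : 'I_m, (ratmx A *m z.1 + ratmx G *m z.2) i 0 <= ratr (b i 0).

Definition inPZ (R : archiRealFieldType) (m p q : nat)
  (A : 'M[rat]_(m, p)) (G : 'M[rat]_(m, q)) (b : 'cV[rat]_m)
  (z : 'cV[R]_p * 'cV[R]_q) : Prop :=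
  inP A G b z /\ forall j : 'I_p, z.1 j 0 \is a Num.int.

Definition conv (R : archiRealFieldType) (p q : nat)
  (S : 'cV[R]_p * 'cV[R]_q -> Prop) (z : 'cV[R]_p * 'cV[R]_q) : Prop :=
  exists (n : nat) (pts : 'I_n -> 'cV[R]_p * 'cV[R]_q) (lam : 'I_n -> R),
    (forall k, S (pts k)) /\ (forall k, 0 <= lam k) /\ \sum_k lam k = 1 /\
    z.1 = \sum_k lam k *: (pts k).1 /\ z.2 = \sum_k lam k *: (pts k).2.

Definition inPI (R : archiRealFieldType) (m p q : nat)
  (A : 'M[rat]_(m, p)) (G : 'M[rat]_(m, q)) (b : 'cV[rat]_m)
  (z : 'cV[R]_p * 'cV[R]_q) : Prop :=
  conv (inPZ A G b) z.

Definition obj (R : archiRealFieldType) (p q : nat)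
  (c : 'rV[rat]_p) (h : 'rV[rat]_q) (z : 'cV[R]_p * 'cV[R]_q) : R :=
  (ratmx c *m z.1) 0 0 + (ratmx h *m z.2) 0 0.

Definition valid (R : archiRealFieldType) (p q : nat)
  (S : 'cV[R]_p * 'cV[R]_q -> Prop) (c : 'rV[rat]_p) (h : 'rV[rat]_q) (g : R) : Prop :=
  forall z, S z -> obj c h z <= g.

(* Q = {v = (v_{1..m}, v_{m+1}) : v_{1..m} G - v_{m+1} h = 0, v >= 0} *)
Definition inQ (R : archiRealFieldType) (m q : nat)
  (G : 'M[rat]_(m, q)) (h : 'rV[rat]_q) (v : 'rV[R]_m * R) : Prop :=
  v.1 *m ratmx G - v.2 *: ratmx h = 0 /\ (forall i, 0 <= v.1 0 i) /\ 0 <= v.2.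

Definition extreme_ray_gen (R : archiRealFieldType) (m : nat)
  (K : 'rV[R]_m * R -> Prop) (v : 'rV[R]_m * R) : Prop :=
  K v /\ v <> (0, 0) /\
  forall u w, K u -> K w -> u.1 + w.1 = v.1 -> u.2 + w.2 = v.2 ->
    exists lam : R, 0 <= lam /\ u.1 = lam *: v.1 /\ u.2 = lam * v.2.

Definition same_ray (R : archiRealFieldType) (m : nat) (v w : 'rV[R]_m * R) : Prop :=
  exists lam : R, 0 < lam /\ w.1 = lam *: v.1 /\ w.2 = lam * v.2.

Definition dvec (R : archiRealFieldType) (m p : nat)
  (A : 'M[rat]_(m, p)) (c : 'rV[rat]_p) (v : 'rV[R]_m * R) : 'rV[R]_p :=
  v.1 *m ratmx A - v.2 *: ratmx c.

Definition delta (R : archiRealFieldType) (m : nat)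
  (b : 'cV[rat]_m) (gs : rat) (v : 'rV[R]_m * R) : R :=
  (Num.ceil ((v.1 *m ratmx b) 0 0 - v.2 * ratr gs))%:~R.

Definition gammar (R : archiRealFieldType) (m : nat)
  (b : 'cV[rat]_m) (gs : rat) (v : 'rV[R]_m * R) : R :=
  (delta b gs v - (v.1 *m ratmx b) 0 0) / (- v.2).

(* Main.v *)
Require Import Defs.
From HB Require Import structures.
From mathcomp Require Import all_boot all_order all_algebra.
From Stdlib Require Import Classical.
Import Order.TTheory GRing.Theory Num.Theory.
Local Open Scope ring_scope.
Set Implicit Arguments. Unset Strict Implicit. Unset Printing Implicit Defensive.

Section Farkas.
Variable R : realFieldType.

Definition dot n (u : 'rV[R]_n) (z : 'cV[R]_n) : R := (u *m z) 0 0.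

Lemma dotD n (u v : 'rV[R]_n) z : dot (u + v) z = dot u z + dot v z.
Proof. by rewrite /dot mulmxDl mxE. Qed.
Lemma dotZ n a (u : 'rV[R]_n) z : dot (a *: u) z = a * dot u z.
Proof. by rewrite /dot -scalemxAl mxE. Qed.
Lemma dotB n (u v : 'rV[R]_n) z : dot (u - v) z = dot u z - dot v z.
Proof. by rewrite /dot mulmxBl !mxE. Qed.
Lemma dotDr n (u : 'rV[R]_n) z z' : dot u (z + z') = dot u z + dot u z'.
Proof. by rewrite /dot mulmxDr mxE. Qed.
Lemma dotZr n a (u : 'rV[R]_n) z : dot u (a *: z) = a * dot u z.
Proof. by rewrite /dot -scalemxAr mxE. Qed.
Lemma dotBr n (u : 'rV[R]_n) z z' : dot u (z - z') = dot u z - dot u z'.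
Proof. by rewrite /dot mulmxBr !mxE. Qed.

Fixpoint incone n (s : seq 'rV[R]_n) (w : 'rV[R]_n) : Prop :=
  match s with
  | [::] => w = 0
  | a :: s' => exists t, 0 <= t /\ incone s' (w - t *: a)
  end.

Lemma rearr (V : zmodType) (w B C U : V) : (w + (B + C)) - U = (w - (U - C)) + B.
Proof. by rewrite opprB !addrA [RHS]addrAC [w + C + B]addrAC. Qed.

Lemma incone_proj n (s : seq 'rV[R]_n) (a : 'rV_n) (z : 'cV_n) w' :
  (forall u, u \in s -> dot u z <= 0) ->
  incone [seq u - dot u z *: a | u <- s] w' ->
  exists be, be <= 0 /\ incone s (w' + be *: a).
Proof.
elim: s w' => [|u s IH] w' Hs /=.
  by move=> ->; exists 0; rewrite scale0r addr0.
case=> t [t0 Hi].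
have Hs' : forall u0, u0 \in s -> dot u0 z <= 0.
  by move=> u0 Hu0; apply: Hs; rewrite inE Hu0 orbT.
have [be' [be'0 Hbe']] := IH _ Hs' Hi.
exists (be' + t * dot u z); split.
  rewrite -(addr0 0) lerD // mulr_ge0_le0 //; apply: Hs; by rewrite inE eqxx.
exists t; split => //.
suff -> : w' + (be' + t * dot u z) *: a - t *: u =
   w' - t *: (u - dot u z *: a) + be' *: a by [].
by rewrite scalerDl -scalerA scalerBr rearr.
Qed.

Lemma msq (x : R) : 0 <= x * x. Proof. by rewrite -expr2 sqr_ge0. Qed.

Lemma dot_self_gt0 n (w : 'rV[R]_n) : w != 0 -> 0 < dot w w^T.
Proof.
move=> wn0.
have [j wj] : exists j, w 0 j != 0.
  apply/existsP; move: wn0; apply: contraR; rewrite negb_exists => /forallP H.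
  apply/eqP/rowP => j; rewrite mxE; apply/eqP; move: (H j); by rewrite negbK.
rewrite /dot mxE (bigD1 j) //= mxE.
rewrite ltr_pwDl //; first by rewrite lt_def mulf_neq0 //= msq .
by apply: sumr_ge0 => i _; rewrite mxE msq.
Qed.

Lemma farkas_k k : forall n (s : seq 'rV[R]_n) w, size s = k -> ~ incone s w ->
  exists z, (forall u, u \in s -> dot u z <= 0) /\ 0 < dot w z.
Proof.
elim: k => [|k IH] n s w.
  case: s => // _ /= Hw; exists w^T; split => //.
  by apply: dot_self_gt0; apply/eqP.
case: s => // a s /= [Hsz] Hni.
have Hni' : ~ incone s w.
  by move=> Hi; apply: Hni; exists 0; rewrite scale0r subr0.
have [z [Hzs Hwz]] := IH _ _ _ Hsz Hni'.
case: (lerP (dot a z) 0) => Haz.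
  exists z; split => // u; rewrite inE => /orP [/eqP -> // | /Hzs //].
set al := dot a z.
set z1 := al^-1 *: z.
have Haz1 : dot a z1 = 1 by rewrite /z1 dotZr mulVf // gt_eqF.
have Hz1s : forall u, u \in s -> dot u z1 <= 0.
  move=> u Hu; rewrite /z1 dotZr; apply: mulr_ge0_le0; last exact: Hzs.
  by rewrite invr_ge0 ltW.
have Hwz1 : 0 < dot w z1 by rewrite /z1 dotZr mulr_gt0 // invr_gt0.
pose s' := [seq u - dot u z1 *: a | u <- s].
pose w' := w - dot w z1 *: a.
have Hni2 : ~ incone s' w'.
  move=> Hi; have [be [be0 Hbe]] := incone_proj Hz1s Hi.
  apply: Hni; exists (dot w z1 - be); split.
    by rewrite subr_ge0 (le_trans be0) // ltW.
  suff -> : w - (dot w z1 - be) *: a = w' + be *: a by [].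
  by rewrite /w' scalerBl opprB addrA addrAC.
have Hsz' : size s' = k by rewrite size_map.
have [z' [Hz's Hwz']] := IH _ s' w' Hsz' Hni2.
exists (z' - dot a z' *: z1); split.
  move=> u; rewrite inE => /orP [/eqP -> | Hu].
    by rewrite dotBr dotZr Haz1 mulr1 subrr.
  apply: le_trans (Hz's (u - dot u z1 *: a) (map_f _ Hu)).
  by rewrite dotBr dotZr dotB dotZ [dot u z1 * _]mulrC.
apply: lt_le_trans Hwz' _.
by rewrite dotBr dotZr /w' dotB dotZ [dot w z1 * _]mulrC.
Qed.

Lemma farkas n (s : seq 'rV[R]_n) w : ~ incone s w ->
  exists z, (forall u, u \in s -> dot u z <= 0) /\ 0 < dot w z.
Proof. exact: farkas_k. Qed.

Lemma incone_seq k n (M : 'M[R]_(k, n)) (l : seq 'I_k) w : uniq l ->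
  incone [seq row i M | i <- l] w ->
  exists mu : 'I_k -> R, (forall i, 0 <= mu i) /\ w = \sum_(i <- l) mu i *: row i M.
Proof.
elim: l w => [|i l IH] w /=.
  by move=> _ ->; exists (fun _ => 0); split => //; rewrite big_nil.
case/andP=> il ul [t [t0 Hi]].
have [mu [mu0 Hmu]] := IH _ ul Hi.
exists (fun j => if j == i then t else mu j); split.
  by move=> j; case: (j == i).
rewrite big_cons eqxx.
rewrite (eq_big_seq (fun j => mu j *: row j M)); last first.
  move=> j jl; case: eqP => // ji; by move: il; rewrite -ji jl.
by rewrite -Hmu addrC subrK.
Qed.

Lemma farkas_mx k n (M : 'M[R]_(k, n)) (w : 'rV_n) :
  (forall z : 'cV_n, (forall i, (M *m z) i 0 <= 0) -> dot w z <= 0) ->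
  exists v : 'rV_k, (forall i, 0 <= v 0 i) /\ v *m M = w.
Proof.
move=> H.
case: (classic (incone [seq row i M | i <- index_enum 'I_k] w)) => Hi.
  have [mu [mu0 Hmu]] := incone_seq (index_enum_uniq _) Hi.
  exists (\row_i mu i); split; first by move=> i; rewrite mxE.
  by rewrite mulmx_sum_row Hmu; apply: eq_bigr => i _; rewrite mxE.
have [z [Hz Hwz]] := farkas Hi.
have : dot w z <= 0.
  apply: H => i; have := Hz (row i M) (map_f _ (mem_index_enum i)).
  by rewrite /dot -row_mul mxE.
by rewrite leNgt Hwz.
Qed.

End Farkas.

Section Decomp.
Variables (R : archiRealFieldType) (m q : nat) (G : 'M[rat]_(m, q)) (h : 'rV[rat]_q).
Variables (I : finType) (vr : I -> 'rV[R]_m * R).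

Definition co (w : 'rV[R]_m * R) (o : option 'I_m) : R :=
  if o is Some i then w.1 0 i else w.2.
Definition supp (w : 'rV[R]_m * R) := [set o | co w o != 0].
Definition comb (w : 'rV[R]_m * R) (t : R) (d : 'rV[R]_m * R) :=
  (w.1 - t *: d.1, w.2 - t * d.2).
Definition gen (w : 'rV[R]_m * R) := exists mu : I -> R, (forall r, 0 <= mu r) /\
  w.1 = \sum_r mu r *: (vr r).1 /\ w.2 = \sum_r mu r * (vr r).2.

Lemma co_comb w t d o : co (comb w t d) o = co w o - t * co d o.
Proof. by case: o => [i|] //=; rewrite !mxE. Qed.

Lemma inQ_ge0 w : inQ G h w -> forall o, 0 <= co w o.
Proof. by case=> _ [H1 H2] [i|] /=. Qed.

Lemma inQ_comb w t d : inQ G h w -> inQ G h d ->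
  (forall o, 0 <= co (comb w t d) o) -> inQ G h (comb w t d).
Proof.
move=> [Hw _] [Hd _] Hc; split; [|split].
- rewrite /= mulmxBl -scalemxAl (subr0_eq Hw) (subr0_eq Hd) scalerA scalerBl.
  exact: subrr.
- by move=> i; exact: (Hc (Some i)).
- exact: (Hc None).
Qed.

Lemma supp0 w : supp w = set0 -> w = (0, 0).
Proof.
move=> H.
have Hco : forall o, co w o = 0.
  move=> o; apply/eqP; apply: negbNE.
  have : o \notin supp w by rewrite H inE.
  by rewrite inE.
case: w Hco {H} => w1 w2 Hco; congr pair; last exact: (Hco None).
by apply/rowP => i; rewrite mxE; exact: (Hco (Some i)).
Qed.

Lemma gen0 : gen (0, 0).
Proof.
exists (fun _ => 0); split => //; split.
  by rewrite big1 // => r _; rewrite scale0r.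
by rewrite big1 // => r _; rewrite mul0r.
Qed.

Lemma gen_ray r w : same_ray (vr r) w -> gen w.
Proof.
case=> lam [lam0 [H1 H2]].
exists (fun s => if s == r then lam else 0); split.
  by move=> s; case: (s == r) => //; rewrite ltW.
split.
  rewrite H1 (bigD1 r) //= eqxx big1 ?addr0 // => s /negbTE ->.
  by rewrite scale0r.
rewrite H2 (bigD1 r) //= eqxx big1 ?addr0 // => s /negbTE ->.
by rewrite mul0r.
Qed.

Lemma gen_add e d t : gen e -> gen d -> 0 <= t ->
  gen (e.1 + t *: d.1, e.2 + t * d.2).
Proof.
case=> mu [mu0 [He1 He2]] [nu [nu0 [Hd1 Hd2]]] t0.
exists (fun r => mu r + t * nu r); split.
  by move=> r; rewrite addr_ge0 // mulr_ge0.
split => /=.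
  rewrite He1 Hd1 scaler_sumr -big_split; apply: eq_bigr => r _.
  by rewrite scalerDl scalerA.
rewrite He2 Hd2 mulr_sumr -big_split; apply: eq_bigr => r _.
by rewrite mulrDl mulrA.
Qed.

End Decomp.

Lemma cut_lemma (R : realFieldType) (T : finType) (X Y : T -> R) :
  (forall o, 0 <= X o) -> (forall o, 0 <= Y o) -> (exists o, 0 < Y o) ->
  exists t o1, [/\ 0 <= t, forall o, 0 <= X o - t * Y o, 0 < Y o1 & X o1 - t * Y o1 = 0].
Proof.
move=> HX HY [o0 Ho0].
case: (@arg_minP _ _ _ o0 (fun o => 0 < Y o) (fun o => X o / Y o) Ho0) => o1 Yo1 Hmin.
exists (X o1 / Y o1), o1; split => //.
- by rewrite divr_ge0 // ltW.
- move=> o; case: (lerP (Y o) 0) => Ho.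
    have -> : Y o = 0 by apply/eqP; rewrite eq_le Ho HY.
    by rewrite mulr0 subr0.
  by rewrite subr_ge0 -ler_pdivlMr //; exact: Hmin.
- by rewrite divfK ?subrr // gt_eqF.
Qed.

Lemma decomp (R : archiRealFieldType) (m q : nat) (G : 'M[rat]_(m, q)) (h : 'rV[rat]_q)
  (I : finType) (vr : I -> 'rV[R]_m * R) :
  (forall w, extreme_ray_gen (inQ G h) w -> exists r, same_ray (vr r) w) ->
  forall w, inQ G h w -> gen vr w.
Proof.
move=> Hall w; move: {2}#|supp w| (leqnn #|supp w|) => k.
elim: k w => [|k IH] w Hk Kw.
  have : supp w = set0 by apply/eqP; rewrite -cards_eq0 -leqn0.
  move/supp0 => ->; exact: gen0.
case: (classic (w = (0,0))) => [-> | wn0]; first exact: gen0.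
case: (classic (extreme_ray_gen (inQ G h) w)) => [Hext | Hnext].
  by have [r Hr] := Hall _ Hext; apply: gen_ray Hr.
have [u [u' [Ku [Ku' [H1 [H2 Hno]]]]]] : exists u u', inQ G h u /\ inQ G h u' /\
    u.1 + u'.1 = w.1 /\ u.2 + u'.2 = w.2 /\
    ~ exists lam : R, 0 <= lam /\ u.1 = lam *: w.1 /\ u.2 = lam * w.2.
  apply: NNPP => Hne; apply: Hnext; split => //; split => // u u' Ku Ku' e1 e2.
  apply: NNPP => Hn; apply: Hne; by exists u, u'.
have Huw : forall o, co w o = co u o + co u' o.
  by case=> [i|] /=; [rewrite -H1 mxE | rewrite -H2].
have Kw0 := inQ_ge0 Kw; have Ku0 := inQ_ge0 Ku; have Ku'0 := inQ_ge0 Ku'.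
have posof : forall x : 'rV[R]_m * R, inQ G h x -> x <> (0,0) -> exists o, 0 < co x o.
  move=> x Kx xn0.
  have : supp x != set0 by apply/eqP => /supp0.
  case/set0Pn => o; rewrite inE => Ho; exists o; by rewrite lt_def Ho (inQ_ge0 Kx).
have [al [o1 [al0 Hd0 Hwo1 Hdo1]]] := cut_lemma Ku0 Kw0 (posof _ Kw wn0).
set d := comb u al w.
have Kd : inQ G h d by apply: inQ_comb => // o; rewrite co_comb.
have Hsub : forall o, co w o = 0 -> co d o = 0.
  move=> o Ho; rewrite co_comb Ho mulr0 subr0.
  have := Huw o; rewrite Ho => /esym/eqP; rewrite paddr_eq0 //.
  by case/andP => /eqP.
have Hsd : (#|supp d| < #|supp w|)%N.
  apply: proper_card; apply/properP; split.
    by apply/subsetP => o; rewrite !inE; apply: contra => /eqP/Hsub/eqP.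
  exists o1; rewrite !inE; first by rewrite gt_eqF.
  by rewrite /d co_comb Hdo1 eqxx.
have dn0 : d <> (0,0).
  move=> Hd; apply: Hno; exists al; split => //.
  by case: Hd => /subr0_eq e1 /subr0_eq e2.
have Kd0 := inQ_ge0 Kd.
have [t [o2 [t0 He0 Hdo2 Heo2]]] := cut_lemma Kw0 Kd0 (posof _ Kd dn0).
set e := comb w t d.
have Ke : inQ G h e by apply: inQ_comb => // o; rewrite co_comb.
have Hse : (#|supp e| < #|supp w|)%N.
  apply: proper_card; apply/properP; split.
    apply/subsetP => o; rewrite !inE; apply: contra => /eqP Ho.
    by rewrite co_comb Ho (Hsub _ Ho) mulr0 subr0.
  exists o2; rewrite !inE; last by rewrite co_comb Heo2 eqxx.
  by apply/eqP => /Hsub Hz; move: Hdo2; rewrite Hz ltxx.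
have Gd := IH d (leq_trans Hsd Hk) Kd.
have Ge := IH e (leq_trans Hse Hk) Ke.
have -> : w = (e.1 + t *: d.1, e.2 + t * d.2).
  by rewrite /= !subrK; exact: surjective_pairing.
exact: gen_add Ge Gd t0.
Qed.


Lemma aff_farkas (R : realFieldType) m q (Gm : 'M[R]_(m,q)) (hv : 'rV_q) (be : 'cV_m)
   (al : R) (yb : 'cV_q) :
  (forall i, (Gm *m yb) i 0 <= be i 0) ->
  (forall y : 'cV_q, (forall i, (Gm *m y) i 0 <= be i 0) -> (hv *m y) 0 0 <= al) ->
  exists v : 'rV_m, (forall i, 0 <= v 0 i) /\ v *m Gm = hv /\ (v *m be) 0 0 <= al.
Proof.
move=> Hyb Hval.
pose M2 : 'M[R]_(m + 1, q + 1) := col_mx (row_mx Gm be) (row_mx 0 1).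
pose w2 : 'rV[R]_(q + 1) := row_mx hv (al%:M).
have [v [v0 Hv]] : exists v : 'rV_(m+1), (forall i, 0 <= v 0 i) /\ v *m M2 = w2.
  apply: farkas_mx => z Hz.
  have Ez := vsubmxK z.
  have HMz : M2 *m z = col_mx (Gm *m usubmx z + be *m dsubmx z) (dsubmx z).
    by rewrite /M2 mul_col_mx -{1 2}Ez !mul_row_col mul0mx add0r mul1mx.
  set y := usubmx z in HMz *; set tm := dsubmx z in HMz Ez *.
  have Htm : tm 0 0 <= 0.
    by have := Hz (rshift m 0); rewrite HMz col_mxEd.
  have Hi : forall i, (Gm *m y) i 0 + be i 0 * tm 0 0 <= 0.
    move=> i; have := Hz (lshift 1 i); rewrite HMz col_mxEu mxE.
    by rewrite [(be *m tm) i 0]mxE big_ord1.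
  have -> : dot w2 z = (hv *m y) 0 0 + al * tm 0 0.
    rewrite /dot /w2 -Ez mul_row_col mul_scalar_mx mxE.
    by rewrite [(al *: tm) 0 0]mxE.
  case: (ltrP (tm 0 0) 0) => Ht.
    have Hn : 0 < - tm 0 0 by rewrite oppr_gt0.
    have Hy' : forall i, (Gm *m ((- tm 0 0)^-1 *: y)) i 0 <= be i 0.
      move=> i; rewrite -scalemxAr mxE ler_pdivrMl //.
      by rewrite mulNr -subr_le0 opprK mulrC.
    have := Hval _ Hy'; rewrite -scalemxAr mxE ler_pdivrMl // => H.
    apply: le_trans (lerD H (lexx _)) _.
    by rewrite mulNr mulrC addNr.
  have Ht0 : tm 0 0 = 0 by apply/eqP; rewrite eq_le Ht Htm.
  rewrite Ht0 mulr0 addr0 leNgt; apply/negP => Hpos.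
  set s := (al - (hv *m yb) 0 0 + 1) / (hv *m y) 0 0.
  have s0 : 0 <= s.
    apply: divr_ge0; last exact: ltW.
    by rewrite addr_ge0 // subr_ge0 (Hval _ Hyb).
  have Hc : (hv *m (yb + s *: y)) 0 0 = al + 1.
    rewrite mulmxDr -scalemxAr mxE [X in _ + X]mxE /s divfK ?gt_eqF //.
    by rewrite addrC [al - _ + 1]addrAC subrK.
  have Hfeas : forall i, (Gm *m (yb + s *: y)) i 0 <= be i 0.
    move=> i; rewrite mulmxDr -scalemxAr mxE [X in _ + X <= _]mxE.
    have := Hi i; rewrite Ht0 mulr0 addr0 => Hg.
    by rewrite -[be i 0]addr0 lerD // mulr_ge0_le0.
  have := Hval _ Hfeas; rewrite Hc => H.
  have Hlt : al < al + 1 by rewrite ltrDl ltr01.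
  by move: (lt_le_trans Hlt H); rewrite ltxx.
move: Hv; rewrite /M2 /w2 -{1}[v]hsubmxK mul_row_col !mul_mx_row add_row_mx.
move/eq_row_mx => [H1 H2].
exists (lsubmx v); split; first by move=> i; rewrite mxE.
split; first by rewrite -H1 mulmx0 addr0.
move/matrixP: H2 => /(_ 0 0); rewrite mxE mulmx1 [al%:M 0 0]mxE /= mulr1n => <-.
by rewrite lerDl mxE.
Qed.

Lemma entry_lin (R : realFieldType) k n (A : 'M[R]_(k, n)) (x0 x : 'cV_n) s i :
  (A *m (x0 + s *: x)) i 0 = (A *m x0) i 0 + s * (A *m x) i 0.
Proof. by rewrite mulmxDr -scalemxAr mxE [X in _ + X]mxE. Qed.

Lemma bnd_farkas (R : realFieldType) m p q (Am : 'M[R]_(m,p)) (Gm : 'M[R]_(m,q))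
  (bv : 'cV_m) (cv : 'rV_p) (hv : 'rV_q) (x0 : 'cV_p) (y0 : 'cV_q) (Mb : R) :
  (forall i, (Am *m x0 + Gm *m y0) i 0 <= bv i 0) ->
  (forall (x : 'cV_p) (y : 'cV_q), (forall i, (Am *m x + Gm *m y) i 0 <= bv i 0) ->
     (cv *m x) 0 0 + (hv *m y) 0 0 <= Mb) ->
  exists v : 'rV_m, (forall i, 0 <= v 0 i) /\ v *m Gm = hv.
Proof.
move=> H0 Hb.
have [v [v0 Hv]] : exists v : 'rV_m, (forall i, 0 <= v 0 i) /\ v *m row_mx Am Gm = row_mx cv hv.
  apply: farkas_mx => z Hz.
  have Ez := vsubmxK z.
  have HMz : row_mx Am Gm *m z = Am *m usubmx z + Gm *m dsubmx z.
    by rewrite -{1}Ez mul_row_col.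
  have -> : dot (row_mx cv hv) z = (cv *m usubmx z) 0 0 + (hv *m dsubmx z) 0 0.
    by rewrite /dot -{1}Ez mul_row_col mxE.
  set x := usubmx z in HMz *; set y := dsubmx z in HMz *.
  rewrite leNgt; apply/negP => Hpos.
  set o := (cv *m x) 0 0 + (hv *m y) 0 0 in Hpos.
  set s := (Mb - ((cv *m x0) 0 0 + (hv *m y0) 0 0) + 1) / o.
  have s0 : 0 <= s.
    apply: divr_ge0; last exact: ltW.
    by rewrite addr_ge0 // subr_ge0 (Hb _ _ H0).
  have Hfeas : forall i, (Am *m (x0 + s *: x) + Gm *m (y0 + s *: y)) i 0 <= bv i 0.
    move=> i; rewrite mxE !entry_lin addrACA -mulrDr.
    have := Hz i; rewrite HMz mxE => Hzi.
    have := H0 i; rewrite mxE => H0i.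
    by rewrite -[bv i 0]addr0 lerD // mulr_ge0_le0.
  have := Hb _ _ Hfeas.
  rewrite !entry_lin addrACA -mulrDr -/o /s divfK ?gt_eqF //.
  rewrite addrC [Mb - _ + 1]addrAC subrK => H.
  have Hlt : Mb < Mb + 1 by rewrite ltrDl ltr01.
  by move: (lt_le_trans Hlt H); rewrite ltxx.
exists v; split => //.
by move: Hv; rewrite mul_mx_row => /eq_row_mx [_ ->].
Qed.


Lemma addE (R : zmodType) m n (A B : 'M[R]_(m, n)) i j : (A + B) i j = A i j + B i j.
Proof. by rewrite mxE. Qed.
Lemma subE (R : zmodType) m n (A B : 'M[R]_(m, n)) i j : (A - B) i j = A i j - B i j.
Proof. by rewrite !mxE. Qed.
Lemma scmxE (R : pzRingType) m n s (A : 'M[R]_(m, n)) i j : (s *: A) i j = s * A i j.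
Proof. by rewrite mxE. Qed.
Lemma ratmxE (R : archiRealFieldType) m n (M : 'M[rat]_(m, n)) i j :
  (ratmx M : 'M[R]_(m, n)) i j = ratr (M i j).
Proof. by rewrite /ratmx mxE. Qed.

Lemma mx_ge0 (R : numDomainType) m (V : 'rV[R]_m) (u : 'cV[R]_m) :
  (forall i, 0 <= V 0 i) -> (forall i, 0 <= u i 0) -> 0 <= (V *m u) 0 0.
Proof. by move=> HV Hu; rewrite mxE; apply: sumr_ge0 => i _; rewrite mulr_ge0. Qed.

Lemma sw4 (V : zmodType) (a b c e : V) : (a - b) - (c - e) = (a - c) - (b - e).
Proof. by rewrite !opprB addrACA [RHS]addrACA [- b + _]addrC. Qed.

Lemma PZ_PI (R : archiRealFieldType) m p q (A : 'M[rat]_(m, p)) (G : 'M[rat]_(m, q))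
  (b : 'cV[rat]_m) (z : 'cV[R]_p * 'cV[R]_q) : inPZ A G b z -> inPI A G b z.
Proof.
move=> Hz; exists 1%N, (fun _ => z), (fun _ => 1); split => //; split => //.
by rewrite !big_ord1 !scale1r; split => //; split.
Qed.

Lemma valid_conv (R : archiRealFieldType) m p q (A : 'M[rat]_(m, p)) (G : 'M[rat]_(m, q))
  (b : 'cV[rat]_m) (c : 'rV[rat]_p) (h : 'rV[rat]_q) (g : R) :
  valid (inPZ A G b) c h g -> valid (inPI A G b) c h g.
Proof.
move=> H z [n [pts [lam [Hp [Hl [Hs [E1 E2]]]]]]].
rewrite /obj E1 E2 !mulmx_sumr !summxE -big_split /=.
have -> : g = \sum_k lam k * g by rewrite -mulr_suml Hs mul1r.
apply: ler_sum => k _; rewrite -!scalemxAr !scmxE -mulrDr.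
by apply: ler_wpM2l => //; exact: H.
Qed.

Unset Implicit Arguments. Set Strict Implicit.

Theorem theorem3p1 (R : archiRealFieldType) (m p q : nat)
  (A : 'M[rat]_(m, p)) (G : 'M[rat]_(m, q)) (b : 'cV[rat]_m)
  (c : 'rV[rat]_p) (h : 'rV[rat]_q) (gs : rat)
  (I : finType) (vr : I -> 'rV[R]_m * R) :
  (exists z : 'cV[R]_p * 'cV[R]_q, inP A G b z) ->
  (exists M : R, valid (inP A G b) c h M) ->
  valid (inPI A G b) c h (ratr gs : R) ->
  ~ valid (inP A G b) c h (ratr gs : R) ->
  (forall r, extreme_ray_gen (inQ G h) (vr r)) ->
  (forall r s, same_ray (vr r) (vr s) -> r = s) ->
  (forall w, extreme_ray_gen (inQ G h) w -> exists r, same_ray (vr r) w) ->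
  (forall r (j : 'I_p), dvec A c (vr r) 0 j \is a Num.int) ->
  (exists r, 0 < (vr r).2) /\
  (forall gh : R,
     (exists r, 0 < (vr r).2 /\ gh = gammar b gs (vr r)) ->
     (forall r, 0 < (vr r).2 -> gammar b gs (vr r) <= gh) ->
     valid (inPI A G b) c h gh /\ ~ valid (inP A G b) c h gh).
Proof.
move=> [z0 Hz0] [Mb HMb] HvalI HnvalP Hext Huniq Hall Hint.
have Kdec := decomp Hall.
have Kvr : forall r, inQ G h (vr r) by move=> r; case: (Hext r).
split.
  have Hz0' : forall i, (ratmx A *m z0.1 + ratmx G *m z0.2) i 0 <= (ratmx b : 'cV[R]_m) i 0.
    by move=> i; rewrite ratmxE; exact: Hz0.
  have Hb' : forall (x : 'cV[R]_p) (y : 'cV[R]_q), (forall i, (ratmx A *m x + ratmx G *m y) i 0 <= (ratmx b : 'cV[R]_m) i 0) ->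
      (ratmx c *m x) 0 0 + (ratmx h *m y) 0 0 <= Mb.
    move=> x y Hxy; apply: (HMb (x, y)) => i; rewrite -ratmxE; exact: Hxy.
  have [v [v0 Hv]] := bnd_farkas Hz0' Hb'.
  have Kv1 : inQ G h (v, 1).
    by split; [rewrite /= scale1r Hv subrr | split => //=; exact: ler01].
  have [mu [mu0 [_ Hmu2]]] := Kdec _ Kv1.
  apply: NNPP => Hn.
  have : (1 : R) <= 0.
    rewrite /= in Hmu2; rewrite Hmu2.
    apply: sumr_le0 => r _; apply: mulr_ge0_le0 (mu0 r) _.
    by rewrite leNgt; apply/negP => H; apply: Hn; exists r.
  by rewrite ler10.
move=> gh [r0 [Hr0 Egh]] Hmax; split; last first.
  move=> HvP; apply: HnvalP => z Hz; apply: le_trans (HvP z Hz) _; rewrite Egh.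
  rewrite /gammar /delta.
  set X := ((vr r0).1 *m ratmx b) 0 0; set s := (vr r0).2.
  rewrite invrN mulrN -mulNr opprB ler_pdivrMr //.
  rewrite lerBlDl [ratr gs * _]mulrC -lerBlDr; exact: ceil_ge.
apply: valid_conv => -[xb yb] [Hz Hzint] /=.
pose be : 'cV[R]_m := ratmx b - ratmx A *m xb.
pose al : R := ratr gs - (ratmx c *m xb) 0 0.
have Hyb : forall i, (ratmx G *m yb) i 0 <= be i 0.
  by move=> i; have := Hz i; rewrite /be subE ratmxE lerBrDl addE.
have Hslice : forall y : 'cV[R]_q,
    (forall i, (ratmx G *m y) i 0 <= be i 0) -> (ratmx h *m y) 0 0 <= al.
  move=> y Hy.
  have Hin : inPZ A G b (xb, y).
    split => // i; rewrite /= addE; have := Hy i; by rewrite /be subE ratmxE lerBrDl.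
  by have := HvalI _ (PZ_PI Hin); rewrite /obj /= /al lerBrDl.
have [v1 [v10 [HvG Hvbe]]] := aff_farkas Hyb Hslice.
have Kv1 : inQ G h (v1, 1).
  by split; [rewrite /= scale1r HvG subrr | split => //=; exact: ler01].
have [mu [mu0 [Hmu1 Hmu2]]] := Kdec _ Kv1.
rewrite /= in Hmu1 Hmu2.
pose T r := ((vr r).1 *m be) 0 0 - (vr r).2 * al.
have HsumT : \sum_r mu r * T r <= 0.
  have -> : \sum_r mu r * T r = (v1 *m be) 0 0 - al.
    rewrite (eq_bigr (fun r => mu r * ((vr r).1 *m be) 0 0 - (mu r * (vr r).2) * al));
      last by move=> r _; rewrite /T mulrBr mulrA.
    rewrite sumrB -mulr_suml -Hmu2 mul1r; congr (_ - _).
    rewrite Hmu1 mulmx_suml summxE; apply: eq_bigr => r _.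
    by rewrite -scalemxAl scmxE.
  by rewrite subr_le0.
have Hnn : forall r, (vr r).2 = 0 -> 0 <= T r.
  move=> r Hr; rewrite /T Hr mul0r subr0.
  have [HrG [Hr1 _]] := Kvr r.
  rewrite Hr scale0r subr0 in HrG.
  have : 0 <= ((vr r).1 *m (be - ratmx G *m yb)) 0 0.
    by apply: mx_ge0 => // i; rewrite subE subr_ge0 Hyb.
  by rewrite mulmxBr mulmxA HrG mul0mx subr0.
have [r [Hr2 HTr]] : exists r, 0 < (vr r).2 /\ T r <= 0.
  apply: NNPP => Hno.
  have HT : forall r, 0 < (vr r).2 -> 0 < T r.
    move=> r Hr; rewrite ltNge; apply/negP => HT; apply: Hno; by exists r.
  have HT0 : forall r, 0 <= T r.
    move=> r; have [_ [_ Hr2]] := Kvr r.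
    case: (ltrP 0 (vr r).2) => Hr; first exact: ltW (HT r Hr).
    by apply: Hnn; apply/eqP; rewrite eq_le Hr Hr2.
  have [r Hpr] : exists r, 0 < mu r * (vr r).2.
    apply: NNPP => Hn.
    have : (1 : R) <= 0.
      rewrite Hmu2; apply: sumr_le0 => r' _; rewrite leNgt; apply/negP => H.
      by apply: Hn; exists r'.
    by rewrite ler10.
  have mur : 0 < mu r.
    rewrite lt_def mu0 andbT; apply/eqP => E; move: Hpr; by rewrite E mul0r ltxx.
  have vr2 : 0 < (vr r).2 by move: Hpr; rewrite pmulr_rgt0.
  have : 0 < \sum_r mu r * T r.
    rewrite (bigD1 r) //=; apply: (lt_le_trans (mulr_gt0 mur (HT r vr2))).
    by rewrite lerDl; apply: sumr_ge0 => i _; exact: mulr_ge0 (mu0 i) (HT0 i).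
  by rewrite ltNge HsumT.
apply: le_trans (Hmax r Hr2).
have [HrG [Hr1 _]] := Kvr r.
move/subr0_eq: HrG => HrG.
have Hdint : (dvec A c (vr r) *m xb) 0 0 \is a Num.int.
  rewrite mxE; apply: rpred_sum => j _; apply: rpredM; [exact: Hint | exact: Hzint].
have Edx : (dvec A c (vr r) *m xb) 0 0 =
    ((vr r).1 *m (ratmx A *m xb)) 0 0 - (vr r).2 * (ratmx c *m xb) 0 0.
  by rewrite /dvec mulmxBl -mulmxA -scalemxAl subE scmxE.
have Ebe : ((vr r).1 *m be) 0 0 =
    ((vr r).1 *m ratmx b) 0 0 - ((vr r).1 *m (ratmx A *m xb)) 0 0.
  by rewrite /be mulmxBr subE.
have HK : ((vr r).1 *m ratmx b) 0 0 - (vr r).2 * ratr gs <= (dvec A c (vr r) *m xb) 0 0.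
  move: HTr; rewrite /T Ebe /al Edx mulrBr sw4 subr_le0 //.
have Hdelta : delta b gs (vr r) <= (dvec A c (vr r) *m xb) 0 0.
  by rewrite /delta -(ceilK Hdint) ler_int; exact: le_ceil HK.
have Hy : (vr r).2 * (ratmx h *m yb) 0 0 <=
    ((vr r).1 *m ratmx b) 0 0 - ((vr r).1 *m (ratmx A *m xb)) 0 0.
  have : 0 <= ((vr r).1 *m (be - ratmx G *m yb)) 0 0.
    by apply: mx_ge0 => // i; rewrite subE subr_ge0 Hyb.
  by rewrite mulmxBr [_ *m (ratmx G *m yb)]mulmxA HrG -scalemxAl subE scmxE subr_ge0 Ebe.
rewrite /gammar invrN mulrN -mulNr opprB ler_pdivlMr // /obj /=.
rewrite mulrDl [_ * (vr r).2]mulrC [(ratmx h *m yb) 0 0 * _]mulrC.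
apply: le_trans (lerD (lexx _) Hy) _.
rewrite addrCA lerD2l -opprB -Edx lerN2.
exact: Hdelta.
Qed.
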